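(* Let $\mathcal{I}$ be a $\delta$-ONI instance with $n$ agents and run Algorithm $\mathtt{approxMMS1}(\mathcal{I},\delta)$. Let $i$ be any agent who did not receive any bag by the end of the algorithm. Then for all $k\in[n]$ with $v_i(B_k)\le1$, we have $v_i(\hat{B}_k)<1+\frac{4\delta}{3}$, where $\hat{B}_k\supseteq B_k$ is the $k$-th bag at the end of the algorithm.
   Context: Instance: agents $[n]$, goods $[m]$, additive valuations; goods with index larger than $m$ are dummy goods of value 0. Ordered: $v_i(1)\ge\dots\ge v_i(m)$ for all $i$. Normalized: every agent $i$ has a partition of the goods into $n$ bundles each of value exactly 1 to $i$ (so $\mathrm{MMS}_i=1$). $\alpha$-irreducible: for every agent $i$, $v_i(1)<\alpha$, $v_i(\{2n-1,2n,2n+1\})<\alpha$, $v_i(\{3n-2,\dots,3n+1\})<\alpha$, $v_i(\{1,2n+1\})<\alpha$. $\delta$-ONI: ordered, normalized, $(3/4+\delta)$-irreducible. $B_k=\{k,2n-k+1\}$; $N^1=\{i:v_i(B_k)\le1\ \forall k\}$; $N^1_1=\{i\in N^1:v_i(2n+1)\ge\frac14-5\delta\}$. Algorithm $\mathtt{approxMMS1}(\mathcal{I},\delta)$: $\alpha=3/4+\delta$, bags $B_1,\dots,B_n$. Phase 1: while some unassigned agent $i$ and unassigned bag $B$ have $v_i(B)\ge\alpha$, assign such $B$ to an agent valuing it at least $\alpha$, choosing an agent of $N^1_1$ whenever one qualifies. Phase 2: process remaining bags one by one; for the current bag $B$, while no unassigned agent values it at least $\alpha$, add to it an arbitrary unused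 good with index $>2n$; then assign $B$ to an unassigned agent valuing it at least $\alpha$ (preferring $N^1_1$). If a good must be added but none is left, the algorithm stops; the bags' contents at the end are $\hat{B}_k$. *)

(* Defs.v *)
(* Formalization of the algorithm approxMMS1 as a
   nondeterministic transition system; a "run" is any sequence of steps
   from the initial state, and "the end of the algorithm" is a reachable
   state in which no step applies. *)
From mathcomp Require Import all_boot all_order all_algebra.
Set Implicit Arguments. Unset Strict Implicit. Unset Printing Implicit Defensive.
Import Order.TTheory GRing.Theory Num.Theory.
Local Open Scope ring_scope.

(* Agents are 'I_n; goods are positive naturals 1, 2, ...; goods with
   index > m are dummy goods.  v i g is the value of good g for agent i. *)

Definition bval (R : numDomainType) (n : nat) (v : 'I_n -> nat -> R)
  (i : 'I_n) (S : seq nat) : R := \sum_(g <- S) v i g.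

(* initial bag B_k = {k, 2n-k+1}, for k in [n] (k : 'I_n stands for k.+1) *)
Definition init_bag (n : nat) (k : 'I_n) : seq nat := [:: k.+1; (2 * n - k)%N].

Definition goods_ok (R : numDomainType) (n m : nat) (v : 'I_n -> nat -> R) :=
  forall i g, 0 <= v i g /\ ((m < g)%N -> v i g = 0).

Definition ordered (R : numDomainType) (n m : nat) (v : 'I_n -> nat -> R) :=
  forall i g, (1 <= g < m)%N -> v i g.+1 <= v i g.

Definition normalized (R : numDomainType) (n m : nat) (v : 'I_n -> nat -> R) :=
  forall i, exists p : nat -> 'I_n,
    forall j : 'I_n, \sum_(1 <= g < m.+1 | p g == j) v i g = 1.

Definition irreducible (R : numDomainType) (n : nat) (v : 'I_n -> nat -> R)
  (alpha : R) :=
  forall i,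
    [/\ v i 1%N < alpha,
        bval v i [:: (2 * n - 1)%N; (2 * n)%N; (2 * n + 1)%N] < alpha,
        bval v i [:: (3 * n - 2)%N; (3 * n - 1)%N; (3 * n)%N; (3 * n + 1)%N] < alpha
      & bval v i [:: 1%N; (2 * n + 1)%N] < alpha].

Definition ONI (R : numFieldType) (n m : nat) (v : 'I_n -> nat -> R) (delta : R) :=
  [/\ goods_ok m v, ordered m v, normalized m v & irreducible v (3/4 + delta)].

Definition N1 (R : numDomainType) (n : nat) (v : 'I_n -> nat -> R) (i : 'I_n) :=
  forall k : 'I_n, bval v i (init_bag k) <= 1.

Definition N11 (R : numFieldType) (n : nat) (v : 'I_n -> nat -> R) (delta : R)
  (i : 'I_n) :=
  N1 v i /\ 1/4 - 5 * delta <= v i (2 * n + 1)%N.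

Record state (n : nat) := State {
  owner : 'I_n -> option 'I_n;   (* agent that received bag k, if any *)
  content : 'I_n -> seq nat;
  phase2 : bool;                 (* false = Phase 1, true = Phase 2 *)
  cur : option 'I_n              (* bag currently processed in Phase 2 *)
}.

Definition init_state (n : nat) : state n :=
  State (fun _ => None) (@init_bag n) false None.

Definition agent_free n (s : state n) (a : 'I_n) := forall k, owner s k <> Some a.
Definition bag_free n (s : state n) (k : 'I_n) := owner s k = None.

Definition assign n (s : state n) (k a : 'I_n) : 'I_n -> option 'I_n :=
  fun k' => if k' == k then Some a else owner s k'.

Section Step.
Variables (R : numFieldType) (n m : nat) (v : 'I_n -> nat -> R) (delta : R).
Let alpha : R := 3/4 + delta.

Definition qualifies (s : state n) (a k : 'I_n) :=
  agent_free s a /\ alpha <= bval v a (content s k).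

Definition good_pick (s : state n) (a k : 'I_n) :=
  qualifies s a k /\
  ((exists a', qualifies s a' k /\ N11 v delta a') -> N11 v delta a).

Inductive step : state n -> state n -> Prop :=
| P1_assign s k a :
    phase2 s = false -> bag_free s k -> good_pick s a k ->
    step s (State (assign s k a) (content s) false None)
| P1_end s :
    phase2 s = false ->
    ~ (exists k a, bag_free s k /\ qualifies s a k) ->
    step s (State (owner s) (content s) true None)
| P2_select s k :
    phase2 s = true -> cur s = None -> bag_free s k ->
    step s (State (owner s) (content s) true (Some k))
| P2_add s k g :
    phase2 s = true -> cur s = Some k ->
    (forall a, ~ qualifies s a k) ->
    (2 * n < g <= m)%N -> (forall k', g \notin content s k') ->
    step s (State (owner s)
                  (fun k' => if k' == k then rcons (content s k) g
                             else content s k')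
                  true (Some k))
| P2_assign s k a :
    phase2 s = true -> cur s = Some k -> good_pick s a k ->
    step s (State (assign s k a) (content s) true None).

Inductive reach : state n -> Prop :=
| reach_init : reach (init_state n)
| reach_step s s' : reach s -> step s s' -> reach s'.

Definition final (s : state n) := reach s /\ ~ (exists s', step s s').

End Step.

(* Main.v *)
Require Import Defs.
From mathcomp Require Import all_boot all_order all_algebra.
From mathcomp Require Import zify ring lra.
Import Order.TTheory GRing.Theory Num.Theory.
Local Open Scope ring_scope.
Set Implicit Arguments. Unset Strict Implicit.

Definition inv (R : realFieldType) (n m : nat) (v : 'I_n -> nat -> R)
  (delta : R) (s : state n) :=
  (forall k, cur s = Some k -> bag_free s k) /\
  forall k a, agent_free s a ->
    content s k = init_bag k \/
    exists c g, content s k = rcons c g /\ bval v a c < 3/4 + delta /\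
                (2 * n < g <= m)%N.

Lemma free_assign' n (s : state n) k a b x y : bag_free s k ->
  agent_free (State (assign s k a) (content s) x y) b ->
  agent_free s b.
Proof.
move=> Hk H k' E; apply: (H k'); rewrite /= /assign.
case: eqP => // Ek; subst k'.
by rewrite /bag_free E in Hk.
Qed.

Lemma inv_reach (R : realFieldType) (n m : nat) (v : 'I_n -> nat -> R)
  (delta : R) s : reach m v delta s -> inv m v delta s.
Proof.
elim=> [|{}s s' _ IH st].
  by split => // k a _; left.
case: st IH.
- move=> {}s k a _ Hk _ [_ IH]; split => // k' b /(free_assign' Hk) Hb; exact: IH.
- move=> {}s _ _ [_ IH]; split => // k' b Hb; exact: IH.
- move=> {}s k _ _ Hk [_ IH]; split => [k' [<-]|] // k' b Hb; exact: IH.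
- move=> {}s k g _ Hc NQ Hg _ [Hc' IH]; split => [k' /= [<-]|]; first exact: Hc'.
  move=> k' b Hb /=.
  case: eqP => [->|_]; last exact: IH.
  right; exists (content s k), g; split => //; split => //.
  rewrite ltNge; apply/negP => Hle; apply: (NQ b); split => //.
- move=> {}s k a _ Hc _ [Hc' IH]; split => // k' b /(free_assign' (Hc' _ Hc)) Hb; exact: IH.
Qed.

Lemma ord_chain (R : realFieldType) (n m : nat) (v : 'I_n -> nat -> R) i b :
  ordered m v -> (1 <= b)%N -> forall d, (b + d <= m)%N -> v i (b + d)%N <= v i b.
Proof.
move=> Ho Hb; elim=> [|d IH] Hd; first by rewrite addn0.
rewrite addnS; apply: le_trans (IH _); last by lia.
apply: Ho; lia.
Qed.

Theorem lemma21 (R : realFieldType) (n m : nat) (v : 'I_n -> nat -> R)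
  (delta : R) :
  0 < delta -> ONI m v delta ->
  forall s : state n, final m v delta s ->
  forall i : 'I_n, agent_free s i ->
  forall k : 'I_n, bval v i (init_bag k) <= 1 ->
  bval v i (content s k) < 1 + 4 * delta / 3.
Proof.
move=> Hd [Hg Ho Hn Hirr] s [Hr _] i Hi k Hk.
case: ((inv_reach Hr).2 k i Hi) => [->|[c [g [-> [Hc Hgm]]]]].
  by apply: le_lt_trans Hk _; lra.
have n1 : (0 < n)%N by have := ltn_ord k; lia.
rewrite /bval -cats1 big_cat big_seq1 /= -/(bval v i c).
have [_ H3 _ _] := Hirr i.
move: H3; rewrite /bval !big_cons big_nil addr0 => H3.
have e1 := Ho i (2 * n - 1)%N.
have e2 := Ho i (2 * n)%N.
have e1' : v i (2 * n)%N <= v i (2 * n - 1)%N.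
  have H : (1 <= 2 * n - 1 < m)%N by lia.
  by move: (e1 H); rewrite (_ : (2 * n - 1).+1 = 2 * n)%N //; lia.
have e2' : v i (2 * n + 1)%N <= v i (2 * n)%N.
  rewrite addn1; apply: e2; lia.
have e3 : v i g <= v i (2 * n + 1)%N.
  have -> : g = (2 * n + 1 + (g - (2 * n + 1)))%N by lia.
  have HH := @ord_chain R n m v i (2*n+1)%N Ho; apply: HH.
  1,2: lia.
move: Hc; rewrite /bval => Hc.
lra.
Qed.
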